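(* Let $n \leq 3$ be a positive integer. Every $n \times n$ nonnegative centrosymmetric matrix has only real eigenvalues. Moreover, real numbers $\lambda_1 \geq \cdots \geq \lambda_n$ are the eigenvalues of some $n \times n$ nonnegative centrosymmetric matrix if and only if $\lambda_1 \geq |\lambda_n|$ and $\sum_{j=1}^n \lambda_j \geq 0$.
   Context: $J$ is the $n \times n$ reverse identity matrix (ones on the anti-diagonal, zeros elsewhere). A matrix $Q$ is centrosymmetric if $JQJ = Q$ and nonnegative if all entries are nonnegative. *)

(* Defs.v *)
From HB Require Import structures.
From mathcomp Require Import all_boot all_order all_algebra.
From mathcomp Require Import reals.
From mathcomp Require Export complex.
Set Implicit Arguments. Unset Strict Implicit. Unset Printing Implicit Defensive.
Import Order.TTheory GRing.Theory Num.Theory.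
Local Open Scope ring_scope.

Definition revid (R : nzRingType) (n : nat) : 'M[R]_n :=
  \matrix_(i < n, j < n) (j == rev_ord i)%:R.

Definition centrosymmetric (R : nzRingType) (n : nat) (Q : 'M[R]_n) : Prop :=
  revid R n *m Q *m revid R n = Q.

Definition nonneg_mx (R : numDomainType) (m n : nat) (Q : 'M[R]_(m, n)) : Prop :=
  forall i j, 0 <= Q i j.

(* Main.v *)
Require Import Defs.
From HB Require Import structures.
From mathcomp Require Import all_boot all_order all_algebra.
From mathcomp Require Import reals ring lra.
From mathcomp Require Import complex.
Import Order.TTheory GRing.Theory Num.Theory.
Local Open Scope ring_scope.
Set Implicit Arguments. Unset Strict Implicit.

Lemma revid_mulE (R : nzRingType) n (Q : 'M[R]_n) i j :
  (revid R n *m Q *m revid R n) i j = Q (rev_ord i) (rev_ord j).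
Proof.
have E (m : nat) (a b : 'I_m) : (a == rev_ord b) = (b == rev_ord a).
  by apply/eqP/eqP => [->|->]; rewrite rev_ordK.
rewrite mxE (bigD1 (rev_ord j)) //= big1 ?addr0; last first.
  by move=> k /negbTE nk; rewrite [revid R n k j]mxE E nk mulr0.
rewrite [revid R n _ j]mxE E eqxx mulr1 mxE (bigD1 (rev_ord i)) //= big1 ?addr0.
  by rewrite mxE eqxx mul1r.
by move=> k /negbTE nk; rewrite !mxE nk mul0r.
Qed.

Lemma centroP (R : nzRingType) n (Q : 'M[R]_n) :
  centrosymmetric Q <-> forall i j, Q (rev_ord i) (rev_ord j) = Q i j.
Proof.
split => [h i j|h]; first by rewrite -revid_mulE h.
by apply/matrixP => i j; rewrite revid_mulE h.
Qed.
Ltac natnorm :=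
  repeat match goal with
  | |- context [inord ?x] =>
      lazymatch x with 0%N => fail | 1%N => fail | 2%N => fail | _ =>
      let y := eval compute in x in rewrite (_ : x = y) // end
  | |- context [(-1) ^+ ?x] =>
      lazymatch x with 0%N => fail | 1%N => fail | 2%N => fail | _ =>
      let y := eval compute in x in rewrite (_ : x = y) // end
  end.

Lemma det22 (R : comNzRingType) (M : 'M[R]_2) :
  \det M = M 0 0 * M 1 1 - M 0 1 * M 1 0.
Proof.
have -> : M = \matrix_(i,j) M (inord i) (inord j).
  by apply/matrixP => i j; rewrite mxE !inord_val.
rewrite (expand_det_row _ 0) !big_ord_recl big_ord0 /cofactor !det_mx11 !mxE /=.
rewrite /bump /=; natnorm; rewrite ?expr0 ?expr1 ?expr2; ring.
Qed.
Lemma det33 (R : comNzRingType) (M : 'M[R]_3) :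
  \det M = M 0 0 * (M 1 1 * M 2 2 - M 1 2 * M 2 1)
         - M 0 1 * (M 1 0 * M 2 2 - M 1 2 * M 2 0)
         + M 0 2 * (M 1 0 * M 2 1 - M 1 1 * M 2 0).
Proof.
have -> : M = \matrix_(i,j) M (inord i) (inord j).
  by apply/matrixP => i j; rewrite mxE !inord_val.
rewrite (expand_det_row _ 0) !big_ord_recl big_ord0 /cofactor !det22 !mxE /=.
rewrite /bump /=; natnorm; rewrite ?expr0 ?expr1 ?expr2; ring.
Qed.

Lemma cp3c (R : comNzRingType) (M : 'M[R]_3) : centrosymmetric M ->
  char_poly M = ('X - (M 0 0 - M 0 2)%:P) *
    ('X * 'X - (M 0 0 + M 0 2 + M 1 1)%:P * 'X
      + ((M 0 0 + M 0 2) * M 1 1 - 2%:R * M 0 1 * M 1 0)%:P).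
Proof.
move/centroP => h.
have r0 : rev_ord (0:'I_3) = 2 by apply/val_inj.
have r1 : rev_ord (1:'I_3) = 1 by apply/val_inj.
have r2 : rev_ord (2:'I_3) = 0 by apply/val_inj.
have e22 := h 0 0; have e21 := h 0 1; have e20 := h 0 2; have e12 := h 1 0.
rewrite r0 r1 r2 in e22 e21 e20 e12.
rewrite /char_poly det33 !mxE /= e22 e21 e20 e12.
rewrite !mulr0n !mulr1n ?polyCB ?polyCD ?polyCM ?polyCN; ring.
Qed.
Lemma gen (R : realType) k (A : 'M[R]_k.+1) (r : seq R) (p : R) :
  char_poly A = \prod_(x <- r) ('X - x%:P) -> p \in r ->
  (forall x, x \in r -> `|x| <= p) -> 0 <= \sum_(x <- r) x ->
  (forall z : complex R, eigenvalue (map_mx (fun x : R => (x%:C)%C) A) z -> z \is Num.real) /\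
  (forall lam : 'I_k.+1 -> R, (forall i j : 'I_k.+1, (i <= j)%N -> lam j <= lam i) ->
     char_poly A = \prod_(i < k.+1) ('X - (lam i)%:P) ->
     `|lam ord_max| <= lam ord0 /\ 0 <= \sum_(i < k.+1) lam i).
Proof.
move=> hA pr hp hs; split.
  move=> z; rewrite eigenvalue_root_char -map_char_poly hA map_prod_XsubC.
  rewrite -(big_map _ xpredT (fun a : complex R => 'X - a%:P)) root_prod_XsubC => /mapP [x _ ->].
  by apply/complex_realP; exists x.
move=> lam hl hlam.
set ps := [seq lam i | i <- enum 'I_k.+1].
have Pe : \prod_(i < k.+1) ('X - (lam i)%:P) = \prod_(x <- ps) ('X - x%:P).
  by rewrite big_map big_enum.
have Se : \sum_(i < k.+1) lam i = \sum_(x <- ps) x by rewrite big_map big_enum.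
rewrite Pe in hlam; rewrite Se; split.
  have : lam ord_max \in r.
    by rewrite -root_prod_XsubC -hA hlam root_prod_XsubC; apply: map_f; rewrite mem_enum.
  move/hp => h1.
  have : p \in ps by rewrite -root_prod_XsubC -hlam hA root_prod_XsubC.
  case/mapP => i _ pe.
  by apply: (le_trans h1); rewrite pe; apply: hl.
have sz : size r = k.+1.
  by have := size_char_poly A; rewrite hA size_prod_XsubC => -[].
have szps : size ps = k.+1 by rewrite size_map size_enum_ord.
have c1 := coefPn_prod_XsubC (ps := r); have c2 := coefPn_prod_XsubC (ps := ps).
rewrite sz in c1; rewrite szps in c2.
have := c1 isT; rewrite -hA hlam c2 // => /oppr_inj ->.
exact: hs.
Qed.

Lemma cp1 (R : comNzRingType) (M : 'M[R]_1) : char_poly M = 'X - (M 0 0)%:P.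
Proof. by rewrite /char_poly det_mx11 !mxE /= mulr1n. Qed.

Lemma cp2c (R : comNzRingType) (M : 'M[R]_2) : centrosymmetric M ->
  char_poly M = ('X - (M 0 0 + M 0 1)%:P) * ('X - (M 0 0 - M 0 1)%:P).
Proof.
move/centroP => h.
have r0 : rev_ord (0:'I_2) = 1 by apply/val_inj.
have r1 : rev_ord (1:'I_2) = 0 by apply/val_inj.
have e11 := h 0 0; have e10 := h 0 1.
rewrite r0 r1 in e11 e10.
rewrite /char_poly det22 !mxE /= e11 e10.
rewrite !mulr0n !mulr1n ?polyCB ?polyCD ?polyCM ?polyCN; ring.
Qed.

Lemma big3 (T : Type) (idx : T) (op : Monoid.law idx) (F : 'I_3 -> T) :
  \big[op/idx]_(i < 3) F i = op (F 0) (op (F 1) (F 2)).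
Proof.
rewrite !big_ord_recl big_ord0 Monoid.mulm1.
by congr (op (F _) (op (F _) (F _))); apply/val_inj.
Qed.

Lemma big2 (T : Type) (idx : T) (op : Monoid.law idx) (F : 'I_2 -> T) :
  \big[op/idx]_(i < 2) F i = op (F 0) (F 1).
Proof.
rewrite !big_ord_recl big_ord0 Monoid.mulm1.
by congr (op (F _) (F _)); apply/val_inj.
Qed.

Definition rootsok {R : realType} {k} (A : 'M[R]_k.+1) :=
  exists (r : seq R) (p : R), char_poly A = \prod_(x <- r) ('X - x%:P) /\ p \in r /\
  (forall x, x \in r -> `|x| <= p) /\ 0 <= \sum_(x <- r) x.

Lemma nec3 (R : realType) (A : 'M[R]_3) : nonneg_mx A -> centrosymmetric A -> rootsok A.
Proof.
move=> hA hc; rewrite /rootsok (cp3c hc).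
have a0 := hA 0 0; have b0 := hA 0 1; have c0 := hA 0 2; have d0 := hA 1 0; have e0 := hA 1 1.
move: (A 0 0) (A 0 1) (A 0 2) (A 1 0) (A 1 1) a0 b0 c0 d0 e0 => a b c d e a0 b0 c0 d0 e0.
pose D := (a + c - e) ^+ 2 + 8%:R * b * d.
have bd0 : 0 <= 8%:R * b * d by rewrite mulr_ge0 // mulr_ge0 // ler0n.
have D0 : 0 <= D by rewrite /D addr_ge0 // sqr_ge0.
pose s := Num.sqrt D.
have s0 : 0 <= s := sqrtr_ge0 D.
have hs2 : s ^+ 2 = D by rewrite sqr_sqrtr.
have habs : `|a + c - e| <= s.
  by rewrite /s -sqrtr_sqr; apply: ler_wsqrtr; rewrite /D lerDl.
move: habs; rewrite ler_norml => /andP [h1 h2].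
exists [:: a - c; (a + c + e + s) / 2%:R; (a + c + e - s) / 2%:R].
exists ((a + c + e + s) / 2%:R).
split.
  rewrite !big_cons big_nil mulr1.
  have eT : a + c + e = (a + c + e + s) / 2%:R + (a + c + e - s) / 2%:R by field.
  have eP : (a + c) * e - 2%:R * b * d = (a + c + e + s) / 2%:R * ((a + c + e - s) / 2%:R).
    have -> : (a + c + e + s) / 2%:R * ((a + c + e - s) / 2%:R) = ((a + c + e) ^+ 2 - s ^+ 2) / 4%:R by field.
    by rewrite hs2 /D; field.

  rewrite {1}eT eP.
  rewrite ?polyCB ?polyCD ?polyCM ?polyCN; ring.
split; first by rewrite !inE eqxx orbT.
split.
  move=> x; rewrite !inE => /or3P [] /eqP -> ; rewrite ler_norml; apply/andP; split; lra.
rewrite !big_cons big_nil; lra.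
Qed.

Lemma nec1 (R : realType) (A : 'M[R]_1) : nonneg_mx A -> rootsok A.
Proof.
move=> hA; exists [:: A 0 0], (A 0 0); rewrite cp1 big_seq1; split => //.
split; first by rewrite inE.
split; first by move=> x; rewrite inE => /eqP ->; rewrite ger0_norm.
by rewrite big_seq1.
Qed.

Lemma nec2 (R : realType) (A : 'M[R]_2) : nonneg_mx A -> centrosymmetric A -> rootsok A.
Proof.
move=> hA hc; rewrite /rootsok (cp2c hc).
have a0 := hA 0 0; have b0 := hA 0 1.
move: (A 0 0) (A 0 1) a0 b0 => a b a0 b0.
exists [:: a + b; a - b], (a + b); split.
  by rewrite !big_cons big_nil mulr1.
split; first by rewrite !inE eqxx.
split; last by rewrite !big_cons big_nil; lra.
by move=> x; rewrite !inE => /orP [] /eqP -> ; rewrite ler_norml; apply/andP; split; lra.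
Qed.

Definition mk3 (R : nzRingType) (a b c d e : R) : 'M[R]_3 :=
  \matrix_(i, j) if i == 1 then (if j == 1 then e else d)
                 else if j == 1 then b else if i == j then a else c.

Lemma mk3_centro (R : nzRingType) (a b c d e : R) : centrosymmetric (mk3 a b c d e).
Proof.
apply/centroP => i j.
have r1 : rev_ord (1:'I_3) = 1 by apply/val_inj.
have rv1 : forall i : 'I_3, (rev_ord i == 1) = (i == 1).
  by move=> k; rewrite -{1}r1 (inj_eq rev_ord_inj).
by rewrite !mxE !rv1 (inj_eq rev_ord_inj).
Qed.

Lemma mk3_nonneg (R : numDomainType) (a b c d e : R) :
  0 <= a -> 0 <= b -> 0 <= c -> 0 <= d -> 0 <= e -> nonneg_mx (mk3 a b c d e).
Proof.
move=> *; move=> i j; rewrite mxE.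
by case: (i == 1); case: (j == 1) => //; case: (i == j).
Qed.

Lemma mk3_cp (R : comNzRingType) (a b c d e : R) :
  char_poly (mk3 a b c d e) = ('X - (a - c)%:P) *
    ('X * 'X - (a + c + e)%:P * 'X + ((a + c) * e - 2%:R * b * d)%:P).
Proof. by rewrite (cp3c (mk3_centro a b c d e)) !mxE /=. Qed.

Lemma poly3 (R : comNzRingType) (mu T P l0 l1 l2 : R) :
  mu = l2 -> T = l0 + l1 -> P = l0 * l1 ->
  ('X - mu%:P) * ('X * 'X - T%:P * 'X + P%:P) =
  ('X - l0%:P) * (('X - l1%:P) * ('X - l2%:P)).
Proof.
move=> -> -> ->; rewrite ?polyCB ?polyCD ?polyCM ?polyCN; ring.
Qed.

Definition Stmt (R : realType) (n : nat) : Prop :=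
  (forall A : 'M[R]_n.+1, nonneg_mx A -> centrosymmetric A ->
     forall z : complex R,
       eigenvalue (map_mx (fun x : R => (x%:C)%C) A) z -> z \is Num.real)
  /\
  (forall lam : 'I_n.+1 -> R,
     (forall i j : 'I_n.+1, (i <= j)%N -> lam j <= lam i) ->
     ((exists A : 'M[R]_n.+1, nonneg_mx A /\ centrosymmetric A /\
         char_poly A = \prod_(i < n.+1) ('X - (lam i)%:P))
      <->
      (`|lam ord_max| <= lam ord0 /\ 0 <= \sum_(i < n.+1) lam i))).

Lemma fromnec (R : realType) k :
  (forall A : 'M[R]_k.+1, nonneg_mx A -> centrosymmetric A -> rootsok A) ->
  (forall lam : 'I_k.+1 -> R,
     (forall i j : 'I_k.+1, (i <= j)%N -> lam j <= lam i) ->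
     `|lam ord_max| <= lam ord0 -> 0 <= \sum_(i < k.+1) lam i ->
     exists A : 'M[R]_k.+1, nonneg_mx A /\ centrosymmetric A /\
         char_poly A = \prod_(i < k.+1) ('X - (lam i)%:P)) ->
  Stmt R k.
Proof.
move=> hn hs; split.
  move=> A hA hc; have [r [p [h1 [h2 [h3 h4]]]]] := hn A hA hc.
  exact: (gen h1 h2 h3 h4).1.
move=> lam hl; split.
  case=> A [hA [hc hcp]]; have [r [p [h1 [h2 [h3 h4]]]]] := hn A hA hc.
  exact: (gen h1 h2 h3 h4).2 lam hl hcp.
by case=> h1 h2; apply: hs.
Qed.

Lemma case1 (R : realType) : Stmt R 0.
Proof.
apply: fromnec => [A hA _|lam hl h1 h2]; first exact: nec1.
have om : ord_max = ord0 :> 'I_1 by apply/val_inj.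
rewrite om in h1.
have l0 : 0 <= lam ord0 := le_trans (normr_ge0 _) h1.
exists (const_mx (lam ord0)); split; first by move=> i j; rewrite mxE.
split; first by apply/centroP => i j; rewrite !mxE.
by rewrite cp1 big_ord1 mxE.
Qed.

Lemma case2 (R : realType) : Stmt R 1.
Proof.
apply: fromnec => [A hA hc|lam hl h1 h2]; first exact: nec2.
have om : ord_max = 1 :> 'I_2 by apply/val_inj.
rewrite om in h1; rewrite big2 /= in h2; change (lam ord0) with (lam 0) in h1.
have h3 := hl 0 1 isT.
move: h1; rewrite ler_norml => /andP [h4 h5].
exists (\matrix_(i, j) if i == j then (lam 0 + lam 1) / 2%:R else (lam 0 - lam 1) / 2%:R).
split; first by move=> i j; rewrite mxE; case: (i == j); lra.
split; first by apply/centroP => i j; rewrite !mxE (inj_eq rev_ord_inj).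
rewrite (cp2c _) ?big2 ?mxE /=; last by apply/centroP => i j; rewrite !mxE (inj_eq rev_ord_inj).
by congr (('X - _%:P) * ('X - _%:P)); field.
Qed.

Lemma case3 (R : realType) : Stmt R 2.
Proof.
apply: fromnec => [A hA hc|lam hl h1 h2]; first exact: nec3.
have om : ord_max = 2 :> 'I_3 by apply/val_inj.
rewrite om in h1; rewrite big3 /= in h2; rewrite big3 /=; change (lam ord0) with (lam 0) in h1.
have h3 := hl 0 1 isT; have h3' := hl 1 2 isT.
move: h1; rewrite ler_norml => /andP [h4 h5].
have [l1p|l1n] := lerP 0 (lam 1).
  exists (mk3 ((lam 0 + lam 2) / 2%:R) 0 ((lam 0 - lam 2) / 2%:R) 0 (lam 1)).
  split; first by apply: mk3_nonneg => //; lra.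
  split; first exact: mk3_centro.
  by rewrite mk3_cp; apply: poly3; field.
exists (mk3 ((lam 0 + lam 1 + lam 2) / 2%:R) 1 ((lam 0 + lam 1 - lam 2) / 2%:R)
          (- (lam 0 * lam 1) / 2%:R) 0).
split.
  apply: mk3_nonneg => //; try lra.
  have : 0 <= lam 0 * (- lam 1) by apply: mulr_ge0; lra.
  rewrite mulrN => ?; lra.
split; first exact: mk3_centro.
by rewrite mk3_cp; apply: poly3; field.
Qed.

Theorem theorem3p1 (R : realType) (n : nat) (hn : (n < 3)%N) :
  (forall A : 'M[R]_n.+1, nonneg_mx A -> centrosymmetric A ->
     forall z : complex R,
       eigenvalue (map_mx (fun x : R => (x%:C)%C) A) z -> z \is Num.real)
  /\
  (forall lam : 'I_n.+1 -> R,
     (forall i j : 'I_n.+1, (i <= j)%N -> lam j <= lam i) ->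
     ((exists A : 'M[R]_n.+1, nonneg_mx A /\ centrosymmetric A /\
         char_poly A = \prod_(i < n.+1) ('X - (lam i)%:P))
      <->
      (`|lam ord_max| <= lam ord0 /\ 0 <= \sum_(i < n.+1) lam i))).
Proof.
case: n hn => [|[|[|n]]] // _; [exact: case1 | exact: case2 | exact: case3].
Qed.
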